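(* Let $\alpha\in(0,1]$, $r\in\mathbb{R}$ and $\gamma\ge 1$. For every policy $\pi\in\Pi$, $\mathcal{U}^{r,\pi}_{\alpha,\gamma}\subseteq \mathcal{S}^{r,\pi}_\alpha$. Moreover, $\mathcal{U}^{r}_{\alpha,\gamma}\subseteq \mathcal{S}^{r}_\alpha$.
   Context: Setting: $S$, $A$, $W$ are Borel spaces (states, controls, disturbances), $T\in\mathbb{N}$. The sample space is $\Omega = (S\times A)^T\times S$ with its Borel $\sigma$-algebra $\mathcal{B}(\Omega)$; for $\omega=(x_0,u_0,\dots,x_{T-1},u_{T-1},x_T)$, $X_t(\omega)=x_t$ and $U_t(\omega)=u_t$. A Borel-measurable map $f:S\times A\times W\to S$ and a probability distribution $P_D$ on $W$ define the transition kernel $Q(B\mid x,u) = P_D(\{d\in W: f(x,u,d)\in B\})$ for $B\in\mathcal{B}(S)$. $\Pi$ is the set of randomized history-dependent policies $\pi=(\pi_0,\dots,\pi_{T-1})$, each $\pi_t$ a Borel-measurable stochastic kernel on $A$ given $H^t=(S\times A)^t\times S$. For $x\in S$, $\pi\in\Pi$, $P_x^\pi$ is the unique probability measure on $(\Omega,\mathcal{B}(\Omega))$ (Ionescu-Tulcea) under which $X_0=x$, $U_t$ is distributed according to $\pi_t(\cdot\mid X_0,U_0,\dots,X_t)$, and $X_{t+1}$ is distributed according to $Q(\cdot\mid X_t,U_t)$; $E_x^\pi$ denotes expectation under $P_x^\pi$. A constraint set $K\in\mathcal{B}(S)$ and a bounded Borel-measurable $g_K:S\to\mathbb{R}$ are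 given; $G := \max_{t=0,1,\dots,T} g_K(X_t)$. For a probability space $(\Omega,\mathcal{F},\mu)$, $Y\in L^1$ and $\alpha\in(0,1]$, $\mathrm{CVaR}_\alpha(Y) := \inf_{s\in\mathbb{R}}\big(s + \tfrac{1}{\alpha}E(\max(Y-s,0))\big)$. $\mathrm{CVaR}^\pi_{\alpha,x}$ denotes CVaR computed with respect to $P_x^\pi$. Risk-sensitive safe sets: $\mathcal{S}_\alpha^{r,\pi} := \{x\in S : \mathrm{CVaR}^\pi_{\alpha,x}(G)\le r\}$ and $\mathcal{S}_\alpha^{r} := \{x\in S : \inf_{\pi\in\Pi}\mathrm{CVaR}^\pi_{\alpha,x}(G)\le r\}$. Approximation sets: $\mathcal{U}^{r,\pi}_{\alpha,\gamma} := \{x\in S : \tfrac{1}{\alpha}E_x^\pi(\sum_{t=0}^T e^{\gamma g_K(X_t)})\le e^{\gamma r}\}$ and $\mathcal{U}^{r}_{\alpha,\gamma} := \{x\in S : \inf_{\pi\in\Pi}\tfrac{1}{\alpha}E_x^\pi(\sum_{t=0}^T e^{\gamma g_K(X_t)})\le e^{\gamma r}\}$. *)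

(* Defs.v *)
From HB Require Import structures.
From mathcomp Require Import all_boot all_order all_algebra.
From mathcomp Require Import all_classical all_reals all_analysis.
Set Implicit Arguments. Unset Strict Implicit. Unset Printing Implicit Defensive.
Import Order.TTheory GRing.Theory Num.Theory.
Local Open Scope classical_set_scope.
Local Open Scope ring_scope.

(* display of the history space H^t = (S x A)^t x S, built as nested products
   H^0 = S, H^(t+1) = (H^t x A) x S. *)
Fixpoint Hd (dS dA : measure_display) (t : nat) : measure_display :=
  match t with
  | 0 => dS
  | t'.+1 => measure_prod_display (measure_prod_display (Hd dS dA t', dA), dS)
  end.

Section history.
Context {dS dA : measure_display} (S : measurableType dS) (A : measurableType dA).

Fixpoint H (t : nat) : measurableType (Hd dS dA t) :=
  match t return measurableType (Hd dS dA t) with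
  | 0 => S
  | t'.+1 => ((H t' * A) * S)%type
  end.

(* projection of a history of length T onto its initial segment of length t
   (an arbitrary point is returned when t > T, which is never used). *)
Fixpoint hist (T : nat) : forall t : nat, H T -> H t :=
  match T return forall t, H T -> H t with
  | 0 => fun t w => match t return H t with 0 => w | _ => point end
  | T'.+1 => fun t w =>
      match eqVneq t T'.+1 with
      | EqNotNeq e => eq_rect T'.+1 H w t (esym e)
      | NeqNotEq _ => @hist T' t w.1.1
      end
  end.
Arguments hist T t w : clear implicits.

Definition Xc (T t : nat) (w : H T) : S :=
  match t return H t -> S with
  | 0 => fun h => h
  | t'.+1 => fun h => h.2
  end (hist T t w).

Definition Uc (T t : nat) (w : H T) : A := (hist T t.+1 w).1.2.

End history.
Arguments H {dS dA} S A t.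
Arguments hist {dS dA S A} T t w.
Arguments Xc {dS dA S A} T t w.
Arguments Uc {dS dA S A} T t w.

Definition Qker {dS dA dW : measure_display} {R : realType}
  {S : measurableType dS} {A : measurableType dA} {W : measurableType dW}
  (f : S * A * W -> S) (PD : probability W R) (B : set S) (x : S) (u : A)
  : \bar R := PD ((fun d => f (x, u, d)) @^-1` B).

(* the measure P is the Ionescu-Tulcea measure P_x^pi on Omega = H T *)
Definition strategic_measure {dS dA dW : measure_display} {R : realType}
  {S : measurableType dS} {A : measurableType dA} {W : measurableType dW}
  (T : nat) (f : S * A * W -> S) (PD : probability W R)
  (pi : forall t : 'I_T, R.-pker (H S A t) ~> A)
  (x : S) (P : probability (H S A T) R) : Prop :=
  [/\
      forall D : set S, measurable D ->
        P (Xc T 0 @^-1` D) = \d_x D,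
      (* U_t is distributed according to pi_t(. | X_0, U_0, ..., X_t) *)
      forall (t : 'I_T) (E : set (H S A t)) (C : set A),
        measurable E -> measurable C ->
        P [set w | hist T t w \in E /\ Uc T t w \in C] =
        (\int[P]_(w in [set w | hist T t w \in E]) pi t (hist T t w) C)%E &
      (* X_{t+1} is distributed according to Q(. | X_t, U_t) *)
      forall (t : 'I_T) (E : set (H S A t * A)) (D : set S),
        measurable E -> measurable D ->
        P [set w | (hist T t w, Uc T t w) \in E /\ Xc T t.+1 w \in D] =
        (\int[P]_(w in [set w | (hist T t w, Uc T t w) \in E])
            Qker f PD D (Xc T t w) (Uc T t w))%E].

Definition Gmax {dS dA : measure_display} {R : realType}
  {S : measurableType dS} {A : measurableType dA}
  (T : nat) (g : S -> R) (w : H S A T) : R :=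
  \big[Num.max/g (Xc T 0 w)]_(t < T.+1) g (Xc T t w).

Definition CVaR {d : measure_display} {R : realType} {Om : measurableType d}
  (P : probability Om R) (alpha : R) (Y : Om -> R) : \bar R :=
  ereal_inf [set (s%:E + (alpha^-1)%:E * \int[P]_w (Num.max (Y w - s) 0)%:E)%E
            | s in [set: R]].

Arguments Qker {dS dA dW R S A W} f PD B x u.
Arguments strategic_measure {dS dA dW R S A W} T f PD pi x P.
Arguments Gmax {dS dA R S A} T g w.
Arguments CVaR {d R Om} P alpha Y.

(* Main.v *)
Require Import Defs.
From HB Require Import structures.
From mathcomp Require Import all_boot all_order all_algebra.
From mathcomp Require Import all_classical all_reals all_analysis.
Import Order.TTheory GRing.Theory Num.Theory.
Local Open Scope classical_set_scope.
Local Open Scope ring_scope.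
Import measurable_realfun.
From mathcomp Require Import ring lra.

Lemma hist_meas (dS dA : measure_display) (S : measurableType dS) (A : measurableType dA)
  (T t : nat) : measurable_fun setT (@hist dS dA S A T t).
Proof.
elim: T t => [|T IH] t /=.
- by case: t => [|t]; [exact: measurable_id | exact: measurable_cst].
- case: eqVneq => [e|ne].
  + subst t => /=; exact: measurable_id.
  + apply: measurableT_comp; first exact: IH.
    apply: measurableT_comp; exact: measurable_fst.
Qed.

Lemma Xc_meas (dS dA : measure_display) (S : measurableType dS) (A : measurableType dA)
  (T t : nat) : measurable_fun setT (@Xc dS dA S A T t).
Proof.
rewrite /Xc; case: t => [|t] /=.
 exact: (@hist_meas _ _ S A T 0).
apply: measurableT_comp; [exact: measurable_snd | exact: hist_meas].
Qed.

Lemma Gmax_meas (R : realType) (dS dA : measure_display) (S : measurableType dS) (A : measurableType dA)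
  (T : nat) (gK : S -> R) : measurable_fun [set: S] gK ->
  measurable_fun setT (@Gmax dS dA R S A T gK).
Proof.
move=> mg; rewrite /Gmax.
have mX : forall t, measurable_fun setT (fun w : H S A T => gK (Xc T t w)).
  by move=> t; apply: measurableT_comp => //; exact: Xc_meas.
elim: (index_enum _) => [|a s IH].
  by under eq_fun do rewrite big_nil; exact: mX.
under eq_fun do rewrite big_cons.
exact: measurable_realfun.measurable_maxr.
Qed.

Lemma part1 (R : realType) (dS dA : measure_display) (S : measurableType dS) (A : measurableType dA)
  (T : nat) (Pr : probability (H S A T) R) (gK : S -> R) (gK_meas : measurable_fun [set: S] gK)
  (alpha r gamma : R) (halpha : 0 < alpha) (hgamma : 0 < gamma) :
  ((alpha^-1)%:E *
     \int[Pr]_w (\sum_(t < T.+1) expR (gamma * gK (Xc T t w)))%:E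
     <= (expR (gamma * r))%:E)%E ->
  (CVaR Pr alpha (Gmax T gK) <= r%:E)%E.
Proof.
move=> hyp.
set F := fun w : H S A T => \sum_(t < T.+1) expR (gamma * gK (Xc T t w)).
have mF : measurable_fun setT F.
  apply: measurable_sum => t; apply: measurableT_comp; first exact: measurable_realfun.measurable_expR.
  apply: measurable_funM; first exact: measurable_cst.
  by apply: measurableT_comp => //; exact: Xc_meas.
have mG := @Gmax_meas R dS dA S A T gK gK_meas.
have F0 : forall w, 0 <= F w by move=> w; apply: sumr_ge0 => t _; exact: expR_ge0.
have GF : forall w, expR (gamma * Gmax T gK w) <= F w.
  move=> w; rewrite /Gmax.
  apply: (big_ind (fun y => expR (gamma * y) <= F w)).
  - rewrite /F (bigD1 ord0) //= lerDl; apply: sumr_ge0 => t _; exact: expR_ge0.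
  - by move=> y1 y2 h1 h2; rewrite maxEle; case: ifP.
  - move=> t _; rewrite /F (bigD1 t) //= lerDl; apply: sumr_ge0 => i _; exact: expR_ge0.
set s := r - gamma^-1.
set k := expR (- (gamma * r)) / gamma.
have pt : forall w, Num.max (Gmax T gK w - s) 0 <= k * F w.
  move=> w; set z := Gmax T gK w - s.
  have ez : gamma * z - 1 = gamma * Gmax T gK w + - (gamma * r).
    rewrite /z /s; field; exact: lt0r_neq0.
  have h1 : Num.max z 0 <= expR (gamma * z - 1) / gamma.
    rewrite maxEle; case: ifP => _.
      by apply: divr_ge0; [exact: expR_ge0 | exact: ltW].
    rewrite ler_pdivlMr // mulrC.
    have := expR_ge1Dx (gamma * z - 1).
    by rewrite addrC subrK.
  apply: (le_trans h1).
  rewrite ez expRD /k -mulrA [X in _ <= X]mulrC.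
  by apply: ler_wpM2r; [rewrite divr_ge0 // ?expR_ge0 // ltW | exact: GF].
have hinf : (CVaR Pr alpha (Gmax T gK) <=
   s%:E + (alpha^-1)%:E * \int[Pr]_w (Num.max (Gmax T gK w - s) 0)%:E)%E.
  by apply: ereal_inf_lbound; exists s.
have k0 : 0 <= k by rewrite divr_ge0 // ?expR_ge0 // ltW.
have hint : (\int[Pr]_w (Num.max (Gmax T gK w - s) 0)%:E <=
             k%:E * \int[Pr]_w (F w)%:E)%E.
  apply: (@le_trans _ _ (\int[Pr]_w (k * F w)%:E)%E).
    apply: ge0_le_integral => //.
    - by move=> w _; rewrite lee_fin le_max lexx orbT.
    - apply/measurable_EFinP; apply: measurable_maxr; last exact: measurable_cst.
      apply: measurable_funB => //; exact: measurable_cst.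
    - by apply/measurable_EFinP; apply: measurable_funM => //; exact: measurable_cst.
    - by move=> w _; rewrite lee_fin.
  under eq_integral do rewrite EFinM.
  rewrite ge0_integralZl_EFin //.
  - by move=> w _; rewrite lee_fin.
  - by apply/measurable_EFinP.
have I0 : (0 <= \int[Pr]_w (F w)%:E)%E by apply: integral_ge0 => w _; rewrite lee_fin.
move: I0 hyp hint; case: (\int[Pr]_w (F w)%:E)%E => [i| |] //=.
- move=> i0 hyp hint.
  apply: (le_trans hinf).
  apply: (@le_trans _ _ (s%:E + (alpha^-1)%:E * (k * i)%:E)%E).
    apply: leeD2l; apply: lee_wpmul2l => //.
    by rewrite lee_fin invr_ge0 ltW.
  rewrite -EFinM -EFinD lee_fin.
  move: hyp; rewrite -EFinM lee_fin => hyp.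
  have : alpha^-1 * (k * i) <= gamma^-1.
    have -> : alpha^-1 * (k * i) = alpha^-1 * i * (expR (- (gamma * r)) / gamma)
      by rewrite /k; ring.
    apply: (@le_trans _ _ (expR (gamma * r) * (expR (- (gamma * r)) / gamma))).
      apply: ler_wpM2r => //; by rewrite divr_ge0 // ?expR_ge0 // ltW.
    by rewrite mulrA expRxMexpNx_1 mul1r.
  rewrite /s; lra.
- move=> _ hyp; exfalso; move: hyp.
  by rewrite mulry gtr0_sg ?invr_gt0 // mul1e leye_eq.
Qed.

Theorem theorem2
  (R : realType) (dS dA dW : measure_display)
  (S : measurableType dS) (A : measurableType dA) (W : measurableType dW)
  (T : nat)
  (f : S * A * W -> S) (f_meas : measurable_fun [set: S * A * W] f)
  (PD : probability W R)
  (P : S -> (forall t : 'I_T, R.-pker (H S A t) ~> A) -> probability (H S A T) R)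
  (HP : forall x pi, strategic_measure T f PD pi x (P x pi))
  (K : set S) (K_meas : measurable K)
  (gK : S -> R) (gK_meas : measurable_fun [set: S] gK)
  (gK_bdd : exists M : R, forall y : S, `|gK y| <= M)
  (alpha r gamma : R)
  (halpha : 0 < alpha <= 1) (hgamma : 1 <= gamma) :
  (forall pi : (forall t : 'I_T, R.-pker (H S A t) ~> A),
     [set x | ((alpha^-1)%:E *
               \int[P x pi]_w (\sum_(t < T.+1) expR (gamma * gK (Xc T t w)))%:E
               <= (expR (gamma * r))%:E)%E]
     `<=` [set x | (CVaR (P x pi) alpha (Gmax T gK) <= r%:E)%E])
  /\
  [set x | (ereal_inf [set ((alpha^-1)%:E *
               \int[P x pi]_w (\sum_(t < T.+1) expR (gamma * gK (Xc T t w)))%:E)%E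
             | pi in [set: forall t : 'I_T, R.-pker (H S A t) ~> A]]
           <= (expR (gamma * r))%:E)%E]
  `<=` [set x | (ereal_inf [set CVaR (P x pi) alpha (Gmax T gK)
             | pi in [set: forall t : 'I_T, R.-pker (H S A t) ~> A]]
           <= r%:E)%E].
Proof.
have a0 : 0 < alpha by case/andP: halpha.
have g0 : 0 < gamma by apply: (lt_le_trans ltr01).
split.
  by move=> pi x /= hx; exact: (@part1 _ _ _ _ _ _ _ _ gK_meas _ _ _ a0 g0 hx).
move=> x /= hx.
apply/lee_addgt0Pr => d d0.
have hlt : (ereal_inf [set ((alpha^-1)%:E *
               \int[P x pi]_w (\sum_(t < T.+1) expR (gamma * gK (Xc T t w)))%:E)%E
             | pi in [set: forall t : 'I_T, R.-pker (H S A t) ~> A]]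
           < (expR (gamma * (r + d)))%:E)%E.
  apply: (le_lt_trans hx); rewrite lte_fin ltr_expR ltr_pM2l // ltrDl //.
have [y [pi _ <-] {}hlt] := ereal_inf_lt hlt.
apply: (le_trans (ereal_inf_lbound _)); first by exists pi.
rewrite -EFinD; exact: (@part1 _ _ _ _ _ _ _ _ gK_meas _ _ _ a0 g0 (ltW hlt)).
Qed.
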